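(* Let $M$ be a matroid on a finite set $E$ with $r(M)>0$ and let $B\in\mathcal{B}(M)$. Then $|F_M(B)|=r(M)$.
   Context: For a matroid $M$: $\mathcal{I}(M)$ its independent sets, $\mathcal{B}(M)$ its bases, $r(M)$ the size of a base, $r(X)$ the rank of $X\subseteq E$. $s(M)=\{A\in\mathcal{I}(M): |A|=r(M)-1\}$; $K_M(X)=\{a\in E: r(X\cup\{a\})=r(X)+1\}$; $F_M(B)=\{K_M(X): X\in s(M),\ X\subseteq B\}$ (a set of sets, so $|F_M(B)|$ counts distinct sets). *)

(* Defs.v *)
(* Matroids on a finite ground set E, given by the type T : finType
   (E = [set: T]), via the independence axioms. *)
From mathcomp Require Import all_boot.
Set Implicit Arguments. Unset Strict Implicit. Unset Printing Implicit Defensive.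

Definition matroid_axioms (T : finType) (I : {set {set T}}) : Prop :=
  [/\ set0 \in I,
      (forall A B : {set T}, B \in I -> A \subset B -> A \in I)
    & (forall A B : {set T}, A \in I -> B \in I -> #|A| < #|B| ->
         exists2 x, x \in B :\: A & x |: A \in I)].

Record matroid (T : finType) := Matroid {
  indep : {set {set T}};
  matroid_ax : matroid_axioms indep }.

Section MatroidDefs.
Variables (T : finType) (M : matroid T).

Definition mrank (X : {set T}) : nat :=
  \max_(A in indep M | A \subset X) #|A|.

Definition mrankM : nat := mrank [set: T].

Definition bases : {set {set T}} :=
  [set B in indep M | [forall C in indep M, (B \subset C) ==> (C == B)]].

Definition sM : {set {set T}} := [set A in indep M | #|A| == mrankM.-1].

Definition KM (X : {set T}) : {set T} :=
  [set a | mrank (a |: X) == (mrank X).+1].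

Definition FM (B : {set T}) : {set {set T}} :=
  [set KM X | X in [set X in sM | X \subset B]].

End MatroidDefs.

(* Main.v *)
Require Import Defs.
From mathcomp Require Import all_boot zify.

Lemma mrank_indep (T : finType) (M : matroid T) (A : {set T}) :
  A \in indep M -> mrank M A = #|A|.
Proof.
move=> HA; apply/eqP; rewrite eqn_leq; apply/andP; split.
  rewrite /mrank; by apply/bigmax_leqP => C /andP [_ HC]; apply: subset_leq_card.
rewrite /mrank /mrankM; apply: (leq_bigmax_cond (F := fun C : {set T} => #|C|)); by rewrite HA subxx.
Qed.

Lemma basis_card (T : finType) (M : matroid T) (B : {set T}) :
  B \in bases M -> #|B| = mrankM M.
Proof.
rewrite inE => /andP [HB /forallP Hmax].
case: (matroid_ax M) => _ _ Haug.
apply/eqP; rewrite eqn_leq; apply/andP; split.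
  rewrite /mrank /mrankM; apply: (leq_bigmax_cond (F := fun C : {set T} => #|C|)); by rewrite HB subsetT.
rewrite /mrankM /mrank; apply/bigmax_leqP => A /andP [HA _]; rewrite leqNgt; apply/negP => Hlt.
have [x Hx Hxi] := Haug B A HB HA Hlt.
have := Hmax (x |: B); rewrite Hxi /= subsetUr /= => /eqP HE.
move: Hx; rewrite inE -HE setU11 //.
Qed.

Theorem proposition2 (T : finType) (M : matroid T) (B : {set T}) :
  0 < mrankM M -> B \in bases M -> #|FM M B| = mrankM M.
Proof.
move=> Hr HBb.
have HcB := @basis_card _ M B HBb.
have HB : B \in indep M by move: HBb; rewrite inE => /andP [].
case: (matroid_ax M) => _ Hsub _.
have HS : [set X in sM M | X \subset B] = [set B :\ b | b in B].
  apply/setP => X; rewrite !inE; apply/andP/imsetP.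
    move=> [/andP [HX /eqP HXc] HXB].
    have H1 : #|B :\: X| == 1.
      rewrite cardsD (setIidPr HXB) HXc -HcB; move: Hr; rewrite -HcB.
      by case: #|B| => // n _; rewrite /= subSnn.
    have [b Hb] := cards1P H1.
    exists b.
      have : b \in B :\: X by rewrite Hb set11.
      by rewrite in_setD => /andP [].
    by rewrite -Hb setDDr setDv set0U (setIidPr HXB).
  move=> [b Hb ->]; split; last by apply: subD1set.
  rewrite (Hsub _ B HB (subD1set B b)) /=.
  by rewrite -HcB (cardsD1 b B) Hb.
rewrite /FM HS -imset_comp card_in_imset // => b1 b2 Hb1 Hb2 /= HK.
apply/eqP; apply/negP => /negP Hne.
have Hind : forall b, b \in B -> mrank M (B :\ b) = #|B|.-1.
  move=> b Hb; rewrite mrank_indep ?(Hsub _ B HB (subD1set B b)) //.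
  by rewrite (cardsD1 b B) Hb.
have Hin : b1 \in KM M (B :\ b1).
  rewrite inE setD1K // mrank_indep // Hind //.
  by rewrite (cardsD1 b1 B) Hb1.
move: Hin; rewrite HK inE.
have Hb1' : b1 \in B :\ b2 by rewrite !inE Hb1 andbT; move: Hne; by rewrite eq_sym.
have -> : b1 |: (B :\ b2) = B :\ b2 by apply/setUidPr; rewrite sub1set.
move=> /eqP; lia.
Qed.
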